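(* Let $I$ be a general ring and $a\in I$. The following are equivalent: (1) $a$ is strongly $\pi$-regular in $I$; (2) there exists an idempotent $p=p^2\in\mathrm{comm}^2(a)$ such that $a-ap\in \mathrm{Nil}(I)$ and $a+p\in Q(I)$; (3) there exists an idempotent $p=p^2\in\mathrm{comm}(a)$ such that $a-ap\in\mathrm{Nil}(I)$ and $a+p\in Q(I)$; (4) there exists $b\in\mathrm{comm}^2(a)$ such that $ab^2=b$ and $a^2b-a\in\mathrm{Nil}(I)$; (5) there exists $b\in\mathrm{comm}(a)$ such that $ab^2=b$ and $a^2b-a\in\mathrm{Nil}(I)$.
   Context: A general ring is an associative ring not necessarily having an identity. $\mathrm{Nil}(I)$ is the set of nilpotent elements of $I$. For $p,q\in I$, $p*q=p+q-pq$; $Q(I)=\{q\in I\mid p*q=0=q*p \text{ for some } p\in I\}$; $\mathrm{comm}(a)=\{x\in I\mid xa=ax\}$, $\mathrm{comm}^2(a)=\{x\in I\mid xy=yx\text{ for all }y\in\mathrm{comm}(a)\}$. An element $a\in I$ is strongly $\pi$-regular if there exist $n\in\mathbb{N}$ and $x\in\mathrm{comm}(a)$ with $a^n=a^{n+1}x$. *)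

(* Defs.v *)
From HB Require Import structures.
From mathcomp Require Import all_boot all_order all_algebra.
Set Implicit Arguments. Unset Strict Implicit. Unset Printing Implicit Defensive.
Import GRing.Theory.
Local Open Scope ring_scope.

(* A general ring: an abelian group with an associative, biadditive product;
   no identity element is assumed. *)
HB.mixin Record Zmodule_isRng V of GRing.Zmodule V := {
  rmul : V -> V -> V;
  rmulA : forall x y z, rmul x (rmul y z) = rmul (rmul x y) z;
  rmulDl : forall x y z, rmul (x + y) z = rmul x z + rmul y z;
  rmulDr : forall x y z, rmul x (y + z) = rmul x y + rmul x z
}.

#[short(type="rngType")]
HB.structure Definition Rng := { V of GRing.Zmodule V & Zmodule_isRng V }.

Section RngDefs.
Variable I : rngType.

(* rpowS x n = x^(n+1)  (positive powers only, no identity available) *)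
Definition rpowS (x : I) (n : nat) : I := iter n (rmul x) x.

Definition nilpotent (x : I) : Prop := exists n : nat, rpowS x n = 0.

Definition circ (p q : I) : I := p + q - rmul p q.

Definition quasireg (q : I) : Prop := exists p : I, circ p q = 0 /\ circ q p = 0.

Definition comm1 (a x : I) : Prop := rmul x a = rmul a x.
Definition comm2 (a x : I) : Prop := forall y : I, comm1 a y -> rmul x y = rmul y x.

(* a is strongly pi-regular: a^n = a^(n+1) x for some n >= 1, x in comm(a).
   Written with n = m+1: a^(m+1) = a^(m+2) x. *)
Definition strongly_pi_regular (a : I) : Prop :=
  exists (m : nat) (x : I), comm1 a x /\ rpowS a m = rmul (rpowS a m.+1) x.

Definition is_idem (p : I) : Prop := rmul p p = p.
End RngDefs.

(* Main.v *)
Require Import Defs.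
From HB Require Import structures.
From mathcomp Require Import all_boot all_order all_algebra.
Import GRing.Theory.
Local Open Scope ring_scope.
Local Notation "x ⋆ y" := (rmul x y) (at level 40, left associativity).
Section S.
Variable I : rngType.
Implicit Types x y z u v w c : I.
Lemma rmul0r y : (0 : I) ⋆ y = 0.
Proof. apply: (addrI (rmul (0:I) y)); by rewrite -rmulDl !addr0. Qed.
Lemma rmulr0 y : y ⋆ (0 : I) = 0.
Proof. apply: (addrI (rmul y (0:I))); by rewrite -rmulDr !addr0. Qed.
Lemma rmulNr x y : (- x) ⋆ y = - (x ⋆ y).
Proof. apply: (addrI (rmul x y)); by rewrite -rmulDl !subrr rmul0r. Qed.
Lemma rmulrN x y : x ⋆ (- y) = - (x ⋆ y).
Proof. apply: (addrI (rmul x y)); by rewrite -rmulDr !subrr rmulr0. Qed.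
Lemma rmulBl x y z : (x - y) ⋆ z = x ⋆ z - y ⋆ z.
Proof. by rewrite rmulDl rmulNr. Qed.
Lemma rmulBr x y z : z ⋆ (x - y) = z ⋆ x - z ⋆ y.
Proof. by rewrite rmulDr rmulrN. Qed.

Lemma rpowSS x n : rpowS x n.+1 = x ⋆ rpowS x n. Proof. by []. Qed.
Lemma rpowSr x n : rpowS x n.+1 = rpowS x n ⋆ x.
Proof. elim: n => [//|n IH]; by rewrite {1}rpowSS {1}IH rmulA. Qed.
Lemma comm_pow x y n : y ⋆ x = x ⋆ y -> y ⋆ rpowS x n = rpowS x n ⋆ y.
Proof.
move=> h; elim: n => [//|n IH]; by rewrite rpowSS rmulA h -rmulA IH rmulA.
Qed.
Lemma comm_pow2 x y i j : y ⋆ x = x ⋆ y ->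
  rpowS y i ⋆ rpowS x j = rpowS x j ⋆ rpowS y i.
Proof.
move=> h; symmetry; apply: comm_pow; symmetry; exact: comm_pow.
Qed.
Lemma pow_mul u v n : u ⋆ v = v ⋆ u ->
  rpowS (u ⋆ v) n = rpowS u n ⋆ rpowS v n.
Proof.
move=> h; elim: n => [//|n IH].
rewrite rpowSS IH !rpowSS -!rmulA; congr (u ⋆ _).
by rewrite !rmulA (comm_pow _ _ _ (esym h)).
Qed.
Lemma nil_up x m n : rpowS x m = 0 -> (m <= n)%N -> rpowS x n = 0.
Proof.
move=> h; elim: n => [|n IH]; first by rewrite leqn0 => /eqP <-.
rewrite leq_eqVlt => /orP [/eqP <- //| lt]; by rewrite rpowSS IH // rmulr0.
Qed.
Lemma rpowN x n : rpowS (- x) n = if odd n then rpowS x n else - rpowS x n.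
Proof.
elim: n => [//|n IH]; rewrite rpowSS IH /= ?rpowSS rmulNr.
by case: (odd n) => /=; rewrite ?rmulrN ?opprK.
Qed.
Lemma nilN x : nilpotent (- x) -> nilpotent x.
Proof.
move=> [n h]; exists n; move: h; rewrite rpowN; case: (odd n) => // /eqP.
by rewrite oppr_eq0 => /eqP.
Qed.
Lemma corner_l z c w : nilpotent w -> z = c ⋆ (z ⋆ w) -> z = 0.
Proof.
move=> [k hk] h.
have H : forall j, exists d, z = d ⋆ (z ⋆ rpowS w j).
  elim=> [|j [d hd]]; first by exists c.
  exists (d ⋆ c); rewrite {1}hd {1}h rpowSS; by rewrite !rmulA.
by have [d ->] := H k; rewrite hk !rmulr0.
Qed.
Lemma corner_r z c w : nilpotent w -> z = (w ⋆ z) ⋆ c -> z = 0.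
Proof.
move=> [k hk] h.
have H : forall j, exists d, z = (rpowS w j ⋆ z) ⋆ d.
  elim=> [|j [d hd]]; first by exists c.
  exists (c ⋆ d); rewrite {1}hd {1}h rpowSr; by rewrite !rmulA.
by have [d ->] := H k; rewrite hk !rmul0r.
Qed.
Section Corner.
Variables a p : I.
Hypotheses (hpp : p ⋆ p = p) (hpa : p ⋆ a = a ⋆ p).
Let w := a - a ⋆ p.
Lemma cw_p : w ⋆ p = 0.
Proof. by rewrite /w rmulBl -rmulA hpp subrr. Qed.
Lemma cp_w : p ⋆ w = 0.
Proof. by rewrite /w rmulBr rmulA hpa -rmulA hpp subrr. Qed.
Lemma cw_a : w ⋆ a = a ⋆ w.
Proof. by rewrite /w rmulBl rmulBr -!rmulA hpa. Qed.
Lemma cw_w : w ⋆ w = a ⋆ w.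
Proof.
rewrite -cw_a {1}/w rmulBr rmulA cw_a -rmulA cw_p rmulr0 subr0 //.
Qed.
Lemma corner_pow n : rpowS a n ⋆ w = rpowS w n.+1.
Proof.
elim: n => [|n IH]; first by rewrite /= cw_w.
by rewrite rpowSr -rmulA -cw_w rmulA IH -rpowSr.
Qed.
Lemma corner_diff n : rpowS a n.+1 - rpowS a n.+1 ⋆ p = rpowS w n.+1.
Proof. by rewrite -corner_pow rpowSr /w rmulBr rmulA. Qed.
End Corner.
Fixpoint Sseq w k : I := if k is k'.+1 then w + w ⋆ Sseq w k' else w.
Section SS.
Variables w p : I.
Hypotheses (wp : w ⋆ p = 0) (pw : p ⋆ w = 0).
Lemma S_w k : Sseq w k ⋆ w = w ⋆ Sseq w k.
Proof. elim: k => [//|k IH] /=; by rewrite rmulDl rmulDr -rmulA IH. Qed.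
Lemma S_p k : Sseq w k ⋆ p = 0.
Proof. elim: k => [//|k IH] /=; by rewrite rmulDl wp -rmulA IH rmulr0 addr0. Qed.
Lemma p_S k : p ⋆ Sseq w k = 0.
Proof. elim: k => [//|k IH] /=; by rewrite rmulDr pw rmulA pw rmul0r addr0. Qed.
Lemma w_S k : w ⋆ Sseq w k + w = Sseq w k + rpowS w k.+1.
Proof.
elim: k => [//=|k IH]; first by rewrite addrC.
have H := congr1 (rmul w) IH; rewrite !rmulDr in H.
rewrite /= rmulDr -!addrA -H.
by rewrite addrA addrC (addrC (w ⋆ w)).
Qed.
End SS.

Lemma qcomm x y c : circ y x = 0 -> circ x y = 0 -> c ⋆ x = x ⋆ c ->
  c ⋆ y = y ⋆ c.
Proof.
rewrite /circ => h1 h2 hc.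
move/eqP: h1; rewrite subr_eq0 => /eqP h1.
move/eqP: h2; rewrite subr_eq0 => /eqP h2.
have hy1 : y = x ⋆ y - x by rewrite -h2 (addrC x) addrK.
have hyx : y ⋆ x = y + x by rewrite h1.
have E1 : c ⋆ y = x ⋆ c ⋆ y - x ⋆ c.
  by rewrite {1}hy1 rmulBr rmulA hc.
have H := congr1 (rmul y) E1.
rewrite rmulBr !rmulA hyx !rmulDl -addrA in H.
have H0 : x ⋆ c ⋆ y - (y ⋆ c + x ⋆ c) = 0.
  by apply: (addrI (y ⋆ c ⋆ y)); rewrite addr0 -H.
move/eqP: H0; rewrite subr_eq0 => /eqP H0.
by rewrite E1 H0 addrK.
Qed.

Section Main.
Variable a : I.

Lemma comm2_core b p y : p ⋆ p = p -> p ⋆ a = a ⋆ p -> nilpotent (a - a ⋆ p) ->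
  b ⋆ a = p -> a ⋆ b = p -> b ⋆ p = b -> p ⋆ b = b -> y ⋆ a = a ⋆ y -> b ⋆ y = y ⋆ b.
Proof.
move=> pp pa nw ba ab bp pb hy.
have h1 : p ⋆ y ⋆ a = a ⋆ (p ⋆ y).
  by rewrite -rmulA hy rmulA pa -rmulA.
have h2 : a ⋆ (y ⋆ p) = y ⋆ p ⋆ a.
  by rewrite rmulA -hy -rmulA -pa rmulA.
have E1 : p ⋆ y = p ⋆ y ⋆ p.
  apply/eqP; rewrite -subr_eq0; apply/eqP.
  move: (erefl (p ⋆ y - p ⋆ y ⋆ p)).
  generalize (p ⋆ y - p ⋆ y ⋆ p) at 2 => z hz.
  have zp : z ⋆ p = 0 by rewrite -hz rmulBl -!rmulA pp subrr.
  have za : z ⋆ a = a ⋆ z.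
    by rewrite -hz rmulBl rmulBr h1 -(rmulA (p ⋆ y)) pa (rmulA (p ⋆ y) a p) h1 -rmulA.
  have pz : p ⋆ z = z by rewrite -hz rmulBr !rmulA pp.
  apply: (corner_l _ b _ nw).
  rewrite hz; by rewrite rmulBr (rmulA z) za -(rmulA a) zp rmulr0 subr0 rmulA ba pz.
have E2 : y ⋆ p = p ⋆ y ⋆ p.
  apply/eqP; rewrite -subr_eq0; apply/eqP.
  move: (erefl (y ⋆ p - p ⋆ y ⋆ p)).
  generalize (y ⋆ p - p ⋆ y ⋆ p) at 2 => z hz.
  have pz : p ⋆ z = 0 by rewrite -hz rmulBr !rmulA pp subrr.
  have za : a ⋆ z = z ⋆ a.
    by rewrite -hz rmulBl rmulBr h2 -!rmulA (rmulA a p) -pa -(rmulA p) h2 !rmulA.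
  have zp : z ⋆ p = z by rewrite -hz rmulBl -!rmulA pp.
  rewrite hz; apply: (corner_r _ b _ nw).
  by rewrite rmulBl -(rmulA a) pz rmulr0 subr0 za -rmulA ab zp.
have E : p ⋆ y = y ⋆ p by rewrite E1 -E2.
rewrite -{1}bp -(rmulA b p y) E -{1}ab (rmulA y a b) hy -(rmulA a y b).
by rewrite (rmulA b a) ba (rmulA p y b) E -(rmulA y p b) pb.
Qed.

Section Five.
Variable b : I.
Hypotheses (hb : b ⋆ a = a ⋆ b) (habb : a ⋆ (b ⋆ b) = b)
  (hn : nilpotent (a ⋆ a ⋆ b - a)).
Lemma f_pp : (a ⋆ b) ⋆ (a ⋆ b) = a ⋆ b.
Proof. by rewrite -rmulA (rmulA b a b) hb -rmulA habb. Qed.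
Lemma f_pa : (a ⋆ b) ⋆ a = a ⋆ (a ⋆ b).
Proof. by rewrite -rmulA hb. Qed.
Lemma f_nw : nilpotent (a - a ⋆ (a ⋆ b)).
Proof. by apply: nilN; rewrite opprB rmulA. Qed.
Lemma five_one : strongly_pi_regular a.
Proof.
have [k hk] := f_nw.
exists k.+1, b; split; first exact: hb.
have := corner_diff _ _ f_pp f_pa k.
rewrite (rpowSS (a - _) k) hk rmulr0 => /eqP; rewrite subr_eq0 => /eqP {1}->.
by rewrite (rpowSr a k.+1) -rmulA.
Qed.
Lemma five_four : comm2 a b.
Proof.
move=> y hy; rewrite /comm1 in hy.
have bp : b ⋆ (a ⋆ b) = b by rewrite rmulA hb -rmulA habb.
have pb : (a ⋆ b) ⋆ b = b by rewrite -rmulA habb.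
exact: (comm2_core _ _ _ f_pp f_pa f_nw hb erefl bp pb hy).
Qed.
End Five.
Lemma one_five : strongly_pi_regular a -> exists b,
  [/\ comm1 a b, a ⋆ (b ⋆ b) = b & nilpotent (a ⋆ a ⋆ b - a)].
Proof.
move=> [m [x [hx hA]]]; rewrite /comm1 in hx.
have hAc : rpowS a m = rpowS a m ⋆ (a ⋆ x) by rewrite {1}hA rpowSr -rmulA.
have hAck : forall k, rpowS a m = rpowS a m ⋆ rpowS (a ⋆ x) k.
  by elim=> [//|k IH]; rewrite rpowSS rmulA -hAc.
have hxc : x ⋆ (a ⋆ x) = (a ⋆ x) ⋆ x by rewrite rmulA hx.
have hac : a ⋆ (a ⋆ x) = (a ⋆ x) ⋆ a by rewrite -(rmulA a x a) hx.
have hpAX : rpowS (a ⋆ x) m = rpowS a m ⋆ rpowS x m by apply: pow_mul.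
have hXp : rpowS x m ⋆ rpowS (a ⋆ x) m = rpowS (a ⋆ x) m ⋆ rpowS x m.
  exact: comm_pow2.
have pp : rpowS (a ⋆ x) m ⋆ rpowS (a ⋆ x) m = rpowS (a ⋆ x) m.
  by rewrite {1}hpAX -rmulA hXp rmulA -(hAck m) hpAX.
have hpa : rpowS (a ⋆ x) m ⋆ a = a ⋆ rpowS (a ⋆ x) m.
  by symmetry; apply: comm_pow.
have hXc : rpowS x m ⋆ (a ⋆ x) = (a ⋆ x) ⋆ rpowS x m.
  by symmetry; apply: comm_pow.
have hpc : rpowS (a ⋆ x) m ⋆ (a ⋆ x) = rpowS (a ⋆ x) m.
  by rewrite {1}hpAX -rmulA hXc rmulA -hAc hpAX.
have hAp := esym (hAck m).
move: pp hpa hpc hAp; generalize (rpowS (a ⋆ x) m) => p pp hpa hpc hAp.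
have hab : a ⋆ (p ⋆ x) = p by rewrite rmulA -hpa -rmulA hpc.
exists (p ⋆ x); split.
- by rewrite /comm1 -rmulA hx rmulA hpa -rmulA.
- by rewrite (rmulA a (p ⋆ x)) hab rmulA pp.
rewrite -rmulA hab; apply: nilN; rewrite opprB.
exists m.+1; have := corner_diff _ _ pp hpa m.
by rewrite rpowSS -(rmulA a _ p) hAp subrr => <-.
Qed.
Lemma qr_core b p : p ⋆ p = p -> p ⋆ a = a ⋆ p -> a ⋆ b = p -> b ⋆ a = p ->
  b ⋆ p = b -> p ⋆ b = b -> nilpotent (a - a ⋆ p) -> quasireg (a + p).
Proof.
move=> pp pa ab ba bp pb nw.
have wp := cw_p a _ pp; have pw := cp_w _ _ pp pa.
move: (erefl (a - a ⋆ p)) wp pw nw; generalize (a - a ⋆ p) at 2 3 4 5.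
move=> w hw wp pw [K hK].
have hSS : w ⋆ Sseq w K + w = Sseq w K.
  by rewrite w_S // rpowSS hK rmulr0 addr0.
move: hSS (S_w w K) (S_p w p wp K) (p_S w p pw K); generalize (Sseq w K).
move=> S hSS Sw Sp pS.
have hwS : w ⋆ S = S - w by rewrite -{2}hSS addrK.
have ha : a = w + a ⋆ p by rewrite -hw subrK.
have hSa : S ⋆ a = S - w.
  by rewrite {1}ha rmulDr -pa rmulA Sp rmul0r addr0 Sw hwS.
have haS : a ⋆ S = S - w.
  by rewrite {1}ha rmulDl -rmulA pS rmulr0 addr0 hwS.
exists (p + b - S); split; rewrite /circ.
  rewrite rmulBl !rmulDl !rmulDr pa pp ba bp hSa Sp.
  rewrite addr0 -hw !opprD ?opprB !opprK !addrA.
  rewrite [LHS](ACl ((1*7)*(5*8)*(2*9)*(3*10)*(4*11)*(6*12))).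
  by rewrite /= ?subrr ?addNr ?addr0.
rewrite rmulDl !rmulBr !rmulDr ab haS pp pb pS.
rewrite ?subr0 -hw !opprD ?opprB !opprK !addrA.
rewrite [LHS](ACl ((1*9)*(2*7)*(3*11)*(4*12)*(5*8)*(6*10))).
by rewrite /= ?subrr ?addNr ?addr0.
Qed.
Lemma three_five p : p ⋆ p = p -> p ⋆ a = a ⋆ p -> nilpotent (a - a ⋆ p) ->
  quasireg (a + p) -> exists b,
  [/\ comm1 a b, a ⋆ (b ⋆ b) = b & nilpotent (a ⋆ a ⋆ b - a)].
Proof.
move=> pp pa nw [y [h1 h2]].
have hay : a ⋆ y = y ⋆ a.
  by apply: (qcomm _ _ _ h1 h2); rewrite rmulDr rmulDl pa.
have hpy : p ⋆ y = y ⋆ p.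
  by apply: (qcomm _ _ _ h1 h2); rewrite rmulDr rmulDl pa pp.
have H := congr1 (rmul p) h1.
have e : p ⋆ (y ⋆ p) = p ⋆ y by rewrite -hpy rmulA pp.
rewrite /circ rmulr0 !rmulBr !rmulDr pp e (rmulA p y a) in H.
move/eqP: H; rewrite subr_eq0 => /eqP H.
have hba : (p ⋆ y - p) ⋆ a = p.
  rewrite rmulBl.
  have H2 : p ⋆ y ⋆ a = p ⋆ a + p.
    by apply: (addIr (p ⋆ y)); rewrite -H addrC.
  by rewrite H2 addrC addKr.
have hc : (p ⋆ y - p) ⋆ a = a ⋆ (p ⋆ y - p).
  by rewrite rmulBl rmulBr pa rmulA -pa -rmulA -hay rmulA.
exists (p ⋆ y - p); split => //.
- by rewrite rmulA -hc hba rmulBr rmulA pp.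
- by rewrite -rmulA -hc hba; apply: nilN; rewrite opprB.
Qed.
End Main.
End S.

Theorem theorem2p10 (I : rngType) (a : I) :
  [<-> strongly_pi_regular a;
       exists p : I, [/\ is_idem p, comm2 a p,
                         nilpotent (a - rmul a p) & quasireg (a + p)];
       exists p : I, [/\ is_idem p, comm1 a p,
                         nilpotent (a - rmul a p) & quasireg (a + p)];
       exists b : I, [/\ comm2 a b, rmul a (rmul b b) = b
                       & nilpotent (rmul (rmul a a) b - a)];
       exists b : I, [/\ comm1 a b, rmul a (rmul b b) = b
                       & nilpotent (rmul (rmul a a) b - a)]].
Proof.
have c21 : forall x, comm2 a x -> comm1 a x by move=> x h; exact: h a erefl.
have four_two : forall b, comm2 a b -> a ⋆ (b ⋆ b) = b ->
    nilpotent (a ⋆ a ⋆ b - a) -> exists p : I, [/\ is_idem p, comm2 a p,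
                         nilpotent (a - rmul a p) & quasireg (a + p)].
  move=> b h2 habb hn; have hb := c21 _ h2.
  exists (a ⋆ b); split.
  - exact: f_pp hb habb.
  - move=> y hy; rewrite -rmulA (h2 y hy) rmulA -hy -rmulA //.
  - exact: f_nw hn.
  apply: (qr_core _ _ b (a ⋆ b)) => //.
  - exact: f_pp hb habb.
  - exact: f_pa hb.
  - by rewrite rmulA hb -rmulA habb.
  - by rewrite -rmulA habb.
  - exact: f_nw hn.
tfae.
- move=> /one_five [b [hb habb hn]]; apply: (four_two b) => //.
  exact: five_four hb habb hn.
- by move=> [p [h1 h2 h3 h4]]; exists p; split => //; apply: c21.
- move=> [p [h1 h2 h3 h4]]; have [b [hb habb hn]] := three_five _ _ _ h1 h2 h3 h4.
  exists b; split => //; exact: five_four hb habb hn.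
- by move=> [b [h1 h2 h3]]; exists b; split => //; apply: c21.
- by move=> [b [h1 h2 h3]]; apply: (five_one _ _ _ h1 h2 h3).
Qed.
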